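(* With $z^3=t(1-t)^2$, one has \[ \sum_{i\ge0}(\tau_i-t\tau_{i-1})w^i=\frac{w(1-tw)}{1-2w+w^2-z^3w^3}=\frac{w}{1-(2-t)w+(1-t)^2w^2}, \] (with $\tau_{-1}=0$), and hence, for all $i\ge0$, \[ \tau_i-t\tau_{i-1}=\frac{\mu_3^i-\mu_2^i}{\mu_3-\mu_2},\qquad \mu_{2,3}=\frac{2-t\mp W}{2},\ W=\sqrt{4t-3t^2}. \] Consequently, for every fixed $i\ge1$, $\lim_{n\to\infty}D_{n,i}/D_n=\dfrac{t^i}{z^{2i+1}}\cdot\dfrac{\mu_3^i-\mu_2^i}{\mu_3-\mu_2}$ (coefficientwise as formal power series in $z$).
   Context: $\tau_i=\tau_i(z)$ are defined by $\sum_{i\ge0}\tau_iw^i=\frac{w}{1-2w+w^2-z^3w^3}$. $t$ is the power series in $z$ with $z^3=t(1-t)^2$, $t=z^3+O(z^6)$. $\mu_2,\mu_3$ are the roots of $X^2-(2-t)X+(1-t)^2$, so $\mu_2+\mu_3=2-t$, $\mu_2\mu_3=(1-t)^2$. For $h\ge1$, $D_h$ is the determinant of the $h\times h$ matrix $T_h$ (indices $0,\dots,h-1$) with $(T_h)_{p,p}=1$, $(T_h)_{p,p+1}=-2z$, $(T_h)_{p,p+2}=z^2$, $(T_h)_{p+1,p}=-z^2$, other entries $0$; $D_0=1$. $D_{n,i}$ is the determinant of $T_n^{\mathsf T}$ with its $i$-th column (columns numbered $1,\dots,n$) replaced by $(1,0,\dots,0)^{\mathsf T}$. *)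

(* Defs.v *)
From HB Require Import structures.
From mathcomp Require Import all_boot all_order all_algebra.
From mathcomp Require Import boolp.

Set Implicit Arguments.
Unset Strict Implicit.
Unset Printing Implicit Defensive.

Import Order.TTheory GRing.Theory.
Local Open Scope ring_scope.

Section FPS.
Variable R : comNzRingType.

Inductive fps : Type := FPS of nat -> R.
Definition coefs (f : fps) : nat -> R := let: FPS g := f in g.

HB.instance Definition _ := gen_eqMixin fps.
HB.instance Definition _ := gen_choiceMixin fps.

Lemma fpsP (f g : fps) : (forall k, coefs f k = coefs g k) -> f = g.
Proof. by case: f; case: g => g f /= H; congr FPS; apply: funext. Qed.

Definition fps0 : fps := FPS (fun _ => 0).
Definition fps_opp (f : fps) : fps := FPS (fun k => - coefs f k).
Definition fps_add (f g : fps) : fps := FPS (fun k => coefs f k + coefs g k).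

Fact fps_addA : associative fps_add.
Proof. by move=> f g h; apply: fpsP => k /=; rewrite addrA. Qed.
Fact fps_addC : commutative fps_add.
Proof. by move=> f g; apply: fpsP => k /=; rewrite addrC. Qed.
Fact fps_add0 : left_id fps0 fps_add.
Proof. by move=> f; apply: fpsP => k /=; rewrite add0r. Qed.
Fact fps_addN : left_inverse fps0 fps_opp fps_add.
Proof. by move=> f; apply: fpsP => k /=; rewrite addNr. Qed.

HB.instance Definition _ :=
  GRing.isZmodule.Build fps fps_addA fps_addC fps_add0 fps_addN.

Definition fps1 : fps := FPS (fun k => (k == 0)%:R).
Definition fps_mul (f g : fps) : fps :=
  FPS (fun k => \sum_(j < k.+1) coefs f j * coefs g (k - j)).

Lemma fps_mulE f g k :
  coefs (fps_mul f g) k = \sum_(j < k.+1) coefs f j * coefs g (k - j).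
Proof. by []. Qed.

Lemma fps_mul_rev f g k :
  coefs (fps_mul f g) k = \sum_(j < k.+1) coefs f (k - j) * coefs g j.
Proof.
rewrite /= (reindex_inj rev_ord_inj) /=.
by apply: eq_bigr => j _; rewrite (sub_ordK j).
Qed.

Fact fps_mulA : associative fps_mul.
Proof.
move=> p q r; apply: fpsP => i; rewrite fps_mulE [RHS]fps_mul_rev.
pose coef3 j k := coefs p j * (coefs q (i - j - k) * coefs r k).
transitivity (\sum_(j < i.+1) \sum_(k < i.+1 | (k <= i - j)%N) coef3 j k).
  apply: eq_bigr => j _; rewrite fps_mul_rev big_distrr /=.
  by rewrite (big_ord_narrow_leq (leq_subr _ _)).
rewrite (exchange_big_dep predT) //=; apply: eq_bigr => k _.
transitivity (\sum_(j < i.+1 | (j <= i - k)%N) coef3 j k).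
  apply: eq_bigl => j; rewrite -ltnS -(ltnS j) -!subSn ?leq_ord //.
  by rewrite -subn_gt0 -(subn_gt0 j) -!subnDA addnC.
rewrite (big_ord_narrow_leq (leq_subr _ _)) big_distrl /=.
by apply: eq_bigr => j _; rewrite /coef3 -!subnDA addnC mulrA.
Qed.

Fact fps_mulC : commutative fps_mul.
Proof.
move=> f g; apply: fpsP => k; rewrite fps_mul_rev /=.
by apply: eq_bigr => j _; rewrite mulrC.
Qed.

Fact fps_mul1 : left_id fps1 fps_mul.
Proof.
move=> f; apply: fpsP => k /=; rewrite big_ord_recl /= mul1r subn0 big1 ?addr0 //.
by move=> j _; rewrite mul0r.
Qed.

Fact fps_mulDl : left_distributive fps_mul fps_add.
Proof.
move=> f g h; apply: fpsP => k /=; rewrite -big_split /=.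
by apply: eq_bigr => j _; rewrite mulrDl.
Qed.

Fact fps1_neq0 : fps1 != fps0.
Proof.
apply/eqP => /(congr1 (fun f => coefs f 0)) /= /eqP; by rewrite oner_eq0.
Qed.

HB.instance Definition _ :=
  GRing.Zmodule_isComNzRing.Build fps fps_mulA fps_mulC fps_mul1 fps_mulDl
    fps1_neq0.

Definition fpsX : fps := FPS (fun k => (k == 1)%:R).
Definition fpsC (a : R) : fps := FPS (fun k => if k == 0 then a else 0).

(* Multiplicative inverse of a series whose constant coefficient is 1:     *)
Fixpoint inv1_seq (f : nat -> R) (n : nat) : seq R :=
  match n with
  | 0 => [:: 1]
  | m.+1 => let s := inv1_seq f m in
            rcons s (- \sum_(j < m.+1) f j.+1 * nth 0 s (m - j))
  end.
Definition inv1 (f : fps) : fps := FPS (fun k => nth 0 (inv1_seq (coefs f) k) k).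

Definition fdivX (m : nat) (f : fps) : fps := FPS (fun k => coefs f (k + m)).

End FPS.

Notation fz := (fpsX rat).
Notation fw := (fpsX (fps rat)).
Notation cz := (@fpsC (fps rat)).

Definition tauGF : fps (fps rat) :=
  fw * inv1 (1 - 2%:R * fw + fw ^+ 2 - cz (fz ^+ 3) * fw ^+ 3).
Definition tau (i : nat) : fps rat := coefs tauGF i.
Definition tau_prev (i : nat) : fps rat := if i is j.+1 then tau j else 0.

Definition Tmat (h : nat) : 'M[fps rat]_h :=
  \matrix_(p < h, q < h)
    if q == p :> nat then 1
    else if q == p.+1 :> nat then - (2%:R * fz)
    else if q == p.+2 :> nat then fz ^+ 2
    else if p == q.+1 :> nat then - fz ^+ 2
    else 0.

Definition Dn (h : nat) : fps rat := \det (Tmat h).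

(* D_{n,i}: det of T_n^T with its i-th column (columns numbered 1..n)
   replaced by (1,0,...,0)^T *)
Definition Dni (n i : nat) : fps rat :=
  \det (\matrix_(p < n, q < n)
          if q.+1 == i then (p == 0 :> nat)%:R else (Tmat n)^T p q).

(* Main.v *)
Require Import Defs.
From HB Require Import structures.
From mathcomp Require Import all_boot all_order all_algebra.
From mathcomp Require Import ring zify.
Import GRing.Theory.
Local Open Scope ring_scope.

Set Implicit Arguments.
Unset Strict Implicit.

Section Gen.
Variable R : comNzRingType.
Implicit Types f g : fps R.
Implicit Types a b : R.

Lemma coefsD f g k : coefs (f + g) k = coefs f k + coefs g k. Proof. by []. Qed.
Lemma coefsN f k : coefs (- f) k = - coefs f k. Proof. by []. Qed.
Lemma coefsB f g k : coefs (f - g) k = coefs f k - coefs g k. Proof. by []. Qed.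
Lemma coefs1 k : coefs (1 : fps R) k = (k == 0)%:R. Proof. by []. Qed.
Lemma coefsM f g k : coefs (f * g) k = \sum_(j < k.+1) coefs f j * coefs g (k - j).
Proof. by []. Qed.
Lemma coefsMn f n k : coefs (f *+ n) k = coefs f k *+ n.
Proof. by elim: n => [|n IH] //; rewrite !mulrS coefsD IH. Qed.
Lemma coefs0 k : coefs (0 : fps R) k = 0. Proof. by []. Qed.

Lemma coefsXM f k : coefs (fpsX R * f) k = if k is k'.+1 then coefs f k' else 0.
Proof.
rewrite coefsM big_ord_recl /= mul0r add0r; case: k => [|k].
  by rewrite big_ord0.
rewrite big_ord_recl /= mul1r subn1 /= big1 ?addr0 // => j _.
by rewrite /bump /= mul0r.
Qed.

Lemma coefsCM a f k : coefs (fpsC a * f) k = a * coefs f k.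
Proof.
rewrite coefsM big_ord_recl /= subn0 big1 ?addr0 // => j _.
by rewrite mul0r.
Qed.

Lemma coefsXnM m f k :
  coefs (fpsX R ^+ m * f) k = if (k < m)%N then 0 else coefs f (k - m).
Proof.
elim: m k => [|m IH] k; first by rewrite expr0 mul1r subn0.
rewrite exprS -mulrA coefsXM; case: k => [|k] //.
Qed.

Lemma Xn_inj m f g : fpsX R ^+ m * f = fpsX R ^+ m * g -> f = g.
Proof.
move=> H; apply: fpsP => k; have := congr1 (fun h => coefs h (k + m)) H.
by rewrite !coefsXnM ltnNge leq_addl /= addnK.
Qed.

Lemma size_inv1_seq (F : nat -> R) m : size (inv1_seq F m) = m.+1.
Proof. by elim: m => [|m IH] //=; rewrite size_rcons IH. Qed.

Lemma nth_inv1_seq (F : nat -> R) m l : (l <= m)%N ->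
  nth 0 (inv1_seq F m) l = nth 0 (inv1_seq F l) l.
Proof.
elim: m => [|m IH]; first by rewrite leqn0 => /eqP ->.
rewrite leq_eqVlt => /orP [/eqP -> //|Hl].
by rewrite /= nth_rcons size_inv1_seq Hl IH.
Qed.

Lemma coefs_inv1S f m : coefs (inv1 f) m.+1 =
  - \sum_(j < m.+1) coefs f j.+1 * coefs (inv1 f) (m - j).
Proof.
rewrite /= nth_rcons size_inv1_seq ltnn eqxx; congr (- _).
apply: eq_bigr => j _; rewrite nth_inv1_seq //; exact: leq_subr.
Qed.

Lemma inv1P f : coefs f 0 = 1 -> f * inv1 f = 1.
Proof.
move=> f0; apply: fpsP => k; rewrite coefsM coefs1; case: k => [|m].
  by rewrite big_ord1 f0 mul1r.
rewrite big_ord_recl f0 mul1r subn0 coefs_inv1S.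
rewrite [X in _ + X](eq_bigr (fun j : 'I_m.+1 => coefs f j.+1 * coefs (inv1 f) (m - j))).
  by rewrite addNr.
by move=> j _; rewrite /bump /= subSS.
Qed.

Lemma inv1P' f : coefs f 0 = 1 -> inv1 f * f = 1.
Proof. by move=> h; rewrite mulrC inv1P. Qed.

Lemma coefsC a k : coefs (fpsC a) k = if k == 0%N then a else 0. Proof. by []. Qed.
Lemma fpsC_mul a b : fpsC a * fpsC b = fpsC (a * b).
Proof. by apply: fpsP => k; rewrite coefsCM !coefsC; case: (k == 0%N); rewrite ?mulr0. Qed.
Lemma fpsC_add a b : fpsC a + fpsC b = fpsC (a + b).
Proof. by apply: fpsP => k; rewrite coefsD !coefsC; case: (k == 0%N); rewrite ?addr0. Qed.
Lemma fpsC_opp a : - fpsC a = fpsC (- a).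
Proof. by apply: fpsP => k; rewrite coefsN !coefsC; case: (k == 0%N); rewrite ?oppr0. Qed.
Lemma fpsC1 : fpsC (1 : R) = 1.
Proof. by apply: fpsP => k; rewrite coefsC coefs1; case: (k == 0%N). Qed.
Lemma fpsC_sub a b : fpsC a - fpsC b = fpsC (a - b).
Proof. by rewrite fpsC_opp fpsC_add. Qed.
Lemma fpsC_nat n : fpsC (n%:R : R) = n%:R.
Proof. elim: n => [|n IH]; first by apply: fpsP => k; rewrite coefsC; case: (k == 0%N).
by rewrite -natr1 -fpsC_add IH fpsC1 natr1. Qed.
Lemma fpsC_exp a n : fpsC (a ^+ n) = fpsC a ^+ n.
Proof. elim: n => [|n IH]; first by rewrite !expr0 fpsC1.
by rewrite !exprS -IH fpsC_mul. Qed.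
End Gen.

Unset Implicit Arguments.
Set Strict Implicit.

Definition Pw : fps (fps rat) := 1 - 2%:R * fw + fw ^+ 2 - cz (fz ^+ 3) * fw ^+ 3.

Lemma mulP_expand (F : fps (fps rat)) : F * Pw =
  F - (fw * F) *+ 2 + fw * (fw * F) - cz (fz ^+ 3) * (fw * (fw * (fw * F))).
Proof. rewrite /Pw; ring. Qed.

Lemma coefs_mulP F k : coefs (F * Pw) k =
  coefs F k - coefs (fw * F) k *+ 2 + coefs (fw * (fw * F)) k
  - fz ^+ 3 * coefs (fw * (fw * (fw * F))) k.
Proof. by rewrite mulP_expand !(coefsB, coefsD, coefsMn, coefsCM). Qed.

Lemma Pw0 : coefs Pw 0 = 1.
Proof. by rewrite -[Pw]mul1r coefs_mulP !coefsXM coefs1 mulr0 mul0rn addr0 !subr0. Qed.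

Lemma tauGF_P : tauGF * Pw = fw.
Proof. by rewrite /tauGF -mulrA inv1P' ?mulr1 // Pw0. Qed.

Definition prevc (F : fps (fps rat)) k := if k is k'.+1 then coefs F k' else 0.

Lemma genrec (F : fps (fps rat)) : F * Pw = fw ->
  [/\ coefs F 0 = 0, coefs F 1 = 1 &
   forall m, coefs F m.+2 - coefs F m.+1 *+ 2 + coefs F m - fz ^+ 3 * prevc F m = 0].
Proof.
move=> H; have E k : coefs (F * Pw) k = coefs fw k by rewrite H.
have F0 : coefs F 0 = 0.
  by move: (E 0%N); rewrite coefs_mulP !coefsXM !(mul0rn, mulr0, subr0, addr0) => ->.
split => //.
- move: (E 1%N); rewrite coefs_mulP !coefsXM F0 !(mul0rn, mulr0, subr0, addr0) => -> //.
- move=> m; move: (E m.+2); rewrite coefs_mulP !coefsXM => -> //.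
Qed.


Lemma tau_facts : [/\ tau 0 = 0, tau 1 = 1 &
  forall m, tau m.+2 - tau m.+1 *+ 2 + tau m - fz ^+ 3 * tau_prev m = 0].
Proof.
by have [h0 h1 h2] := genrec tauGF tauGF_P; split.
Qed.

Section T.
Variable t : fps rat.
Hypothesis ht : fz ^+ 3 = t * (1 - t) ^+ 2.

Definition aa k := tau k - t * tau_prev k.

Lemma aa0 : aa 0 = 0.
Proof. by case: tau_facts => h0 _ _; rewrite /aa h0 /= mulr0 subr0. Qed.
Lemma aa1 : aa 1 = 1.
Proof. by case: tau_facts => h0 h1 _; rewrite /aa /= h1 h0 mulr0 subr0. Qed.
Lemma aa_rec m : aa m.+2 = (2%:R - t) * aa m.+1 - (1 - t) ^+ 2 * aa m.
Proof.
case: tau_facts => _ _ h; apply/eqP; rewrite -subr_eq0; apply/eqP.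
rewrite -(h m) /aa /= ht; ring.
Qed.

Lemma partI : FPS (fun i => tau i - t * tau_prev i) =
  fw * (1 - cz t * fw) * inv1 Pw.
Proof.
have -> : fw * (1 - cz t * fw) * inv1 Pw = tauGF - cz t * (fw * tauGF).
  by rewrite /tauGF; ring.
apply: fpsP => k; rewrite coefsB coefsCM [coefs (fw * tauGF) _]coefsXM.
by case: k.
Qed.

Definition Qw := 1 - cz (2%:R - t) * fw + cz ((1 - t) ^+ 2) * fw ^+ 2.

Lemma Pw_fact : Pw = (1 - cz t * fw) * Qw.
Proof.
have Csub := fun a b => esym (@fpsC_sub (fps rat) a b).
have Cmul := fun a b => esym (@fpsC_mul (fps rat) a b).
rewrite /Pw /Qw ht !(Csub, Cmul, fpsC_exp, fpsC1, fpsC_nat).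
ring.
Qed.

Lemma Qw0 : coefs Qw 0 = 1.
Proof.
have -> : Qw = 1 - cz (2%:R - t) * (fw * 1) + cz ((1 - t) ^+ 2) * (fw * (fw * 1)).
  by rewrite /Qw; ring.
by rewrite !(coefsD, coefsB, coefsN, coefsCM) !coefsXM !(mulr0, oppr0, subr0, addr0).
Qed.

Lemma partII : FPS (fun i => tau i - t * tau_prev i) = fw * inv1 Qw.
Proof.
rewrite partI.
have E : fw * (1 - cz t * fw) * inv1 Pw * Qw = fw.
  have -> : fw * (1 - cz t * fw) * inv1 Pw * Qw = fw * (((1 - cz t * fw) * Qw) * inv1 Pw) by ring.
  by rewrite -Pw_fact inv1P ?mulr1 // Pw0.
transitivity (fw * (1 - cz t * fw) * inv1 Pw * Qw * inv1 Qw).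
  by rewrite -[_ * Qw * inv1 Qw]mulrA inv1P ?mulr1 // Qw0.
by rewrite E.
Qed.
End T.

Section Abs.
Variable R : comNzRingType.
Variables (z s t : R) (a : nat -> R).
Hypotheses (ha0 : a 0 = 0) (ha1 : a 1 = 1)
  (har : forall m, a m.+2 = (2%:R - t) * a m.+1 - (1 - t) ^+ 2 * a m)
  (hts : t = z ^+ 3 * s) (hs : s * (1 - t) ^+ 2 = 1).

Definition Y q := z ^+ q * s ^+ q.+1 * a q.+1.

Lemma YE0 : Y 0 - z ^+ 2 * Y 1 = 1.
Proof.
rewrite /Y (har 0) ha1 ha0.
transitivity (s * (1 - t) ^+ 2); last exact: hs.
rewrite hts; ring.
Qed.

Lemma YE1 : Y 1 - 2%:R * z * Y 0 - z ^+ 2 * Y 2 = 0.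
Proof.
rewrite /Y (har 1) (har 0) ha1 ha0.
transitivity (2%:R * z * s * (s * (1 - t) ^+ 2 - 1)); last by rewrite hs subrr mulr0.
rewrite hts; ring.
Qed.

Lemma YEm m : Y m.+2 - 2%:R * z * Y m.+1 + z ^+ 2 * Y m - z ^+ 2 * Y m.+3 = 0.
Proof.
rewrite /Y (har m.+2) (har m.+1).
transitivity (z ^+ m * z ^+ 2 * s ^+ m * s * (s * (1 - t) ^+ 2 - 1) *
  (2%:R * s * a m.+2 - a m.+1 * (s * (1 - t) ^+ 2 + 1)));
  last by rewrite hs subrr mulr0 mul0r.
rewrite hts !exprS; ring.
Qed.
End Abs.

Definition Tf (p q : nat) : fps rat :=
    if q == p :> nat then 1
    else if q == p.+1 :> nat then - (2%:R * fz)
    else if q == p.+2 :> nat then fz ^+ 2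
    else if p == q.+1 :> nat then - fz ^+ 2
    else 0.

Lemma TmatE n (p q : 'I_n) : Tmat n p q = Tf p q.
Proof. by rewrite /Tmat mxE. Qed.

Lemma Tf_split p q : Tf p q = (q == p)%:R - 2%:R * fz * (q == p.+1)%:R
  + fz ^+ 2 * (q == p.+2)%:R - fz ^+ 2 * (q.+1 == p)%:R.
Proof.
rewrite /Tf.
case: (q =P p) => h1; case: (q =P p.+1) => h2; case: (q =P p.+2) => h3;
  case: (p =P q.+1) => h4; case: (q.+1 =P p) => h5; try (exfalso; lia);
  rewrite /= ?mulr0 ?mulr1 ?subr0 ?addr0 ?sub0r ?add0r //.
Qed.

Lemma sum_ind (F : nat -> fps rat) (n c q : nat) :
  \sum_(p < n) F p * (q == p + c)%N%:R = ((c <= q) && (q - c < n))%N%:R * F (q - c)%N.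
Proof.
elim: n => [|n IH]; first by rewrite big_ord0 /= andbF mul0r.
rewrite big_ord_recr /= IH.
have [->|ne] := eqVneq q (n + c)%N.
  by rewrite addnK leq_addl ltnn ltnSn /= mul0r add0r mulr1 mul1r.
rewrite mulr0 addr0.
have -> : ((c <= q) && (q - c < n.+1))%N = ((c <= q) && (q - c < n))%N => //.
by apply/idP/idP => /andP [h1 h2]; apply/andP; split => //; lia.
Qed.

Lemma sumT (Y : nat -> fps rat) (n q : nat) : (q < n)%N ->
  \sum_(p < n) Y p * Tf p q =
  Y q - 2%:R * fz * ((1 <= q)%N%:R * Y q.-1) + fz ^+ 2 * ((2 <= q)%N%:R * Y (q - 2)%N)
  - fz ^+ 2 * ((q.+1 < n)%N%:R * Y q.+1).
Proof.
move=> qn.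
have E p : Y p * Tf p q = Y p * (q == p + 0)%N%:R - 2%:R * fz * (Y p * (q == p + 1)%N%:R)
   + fz ^+ 2 * (Y p * (q == p + 2)%N%:R) - fz ^+ 2 * (Y p * (q.+1 == p + 0)%N%:R).
  rewrite Tf_split addn0 addn1 addn2; ring.
under eq_bigr => p _ do rewrite E.
rewrite !(sumrB, big_split) /= -!mulr_sumr !sum_ind.
rewrite !subn0 !leq0n qn /= mul1r; clear E.
congr (_ - _ * (_ * _) + _ * (_ * _) - _ * (_ * _)).
all: try by rewrite subn1.
- have -> : (q - 1 < n)%N by lia.
  by rewrite andbT.
- have -> : (q - 2 < n)%N by lia.
  by rewrite andbT.
Qed.

Lemma sumT_final (Y : nat -> fps rat) (n q : nat) : (q < n)%N ->
  Y 0 - fz ^+ 2 * Y 1 = 1 ->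
  Y 1 - 2%:R * fz * Y 0 - fz ^+ 2 * Y 2 = 0 ->
  (forall m, Y m.+2 - 2%:R * fz * Y m.+1 + fz ^+ 2 * Y m - fz ^+ 2 * Y m.+3 = 0) ->
  \sum_(p < n) Y p * Tf p q = (q == 0)%N%:R + (q.+1 == n)%N%:R * (fz ^+ 2 * Y n).
Proof.
move=> qn E0 E1 Em; rewrite sumT //.
have E0' : Y 0 - fz ^+ 2 * Y 1 - 1 = 0 by rewrite E0 subrr.
have [e|ne] := eqVneq q.+1 n.
  rewrite -e ltnn.
  case: {qn e} q => [|[|m]] /=; apply/eqP; rewrite -subr_eq0; apply/eqP.
  - by rewrite -E0'; ring.
  - by rewrite -E1; ring.
  - by rewrite -(Em m) subn2 /=; ring.
have -> : (q.+1 < n)%N by lia.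
case: {qn ne} q => [|[|m]] /=; apply/eqP; rewrite -subr_eq0; apply/eqP.
- by rewrite -E0'; ring.
- by rewrite -E1; ring.
- by rewrite -(Em m) subn2 /=; ring.
Qed.

Definition c0 (f : fps rat) : rat := coefs f 0.

Lemma c0_zmod : zmod_morphism c0.
Proof. by move=> f g. Qed.
Lemma c0_monoid : monoid_morphism c0.
Proof.
split; first by [].
by move=> f g; rewrite /c0 coefsM big_ord1.
Qed.
HB.instance Definition _ := GRing.isZmodMorphism.Build (fps rat) rat c0 c0_zmod.
HB.instance Definition _ := GRing.isMonoidMorphism.Build (fps rat) rat c0 c0_monoid.

Lemma c0X : c0 fz = 0. Proof. by []. Qed.

Lemma det0 n : coefs (Dn n) 0 = 1.
Proof.
have -> : coefs (Dn n) 0 = c0 (Dn n) by [].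
rewrite /Dn -det_map_mx.
have -> : map_mx c0 (Tmat n) = 1%:M.
  apply/matrixP => p q; rewrite !mxE.
  have e1 : c0 (- (2%:R * fz)) = 0.
    by rewrite /c0 coefsN mulr_natl coefsMn /= mul0rn oppr0.
  have e2 : c0 (fz ^+ 2) = 0 by rewrite /c0 -[fz ^+ 2]mulr1 coefsXnM.
  have e3 : c0 (- fz ^+ 2) = 0 by rewrite /c0 coefsN -[fz ^+ 2]mulr1 coefsXnM oppr0.
  have e4 : c0 1 = 1 by [].
  rewrite !(fun_if c0) e1 e2 e3 e4 /c0 coefs0.
  rewrite !if_same; have [e|ne] := eqVneq (nat_of_ord q) (nat_of_ord p).
    have eq : q = p by apply: val_inj.
    by rewrite eq eqxx.
  have -> // : (p == q) = false.
  by apply/eqP => e; move: ne; rewrite e eqxx.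
by rewrite det_scalar expr1n.
Qed.

Lemma Dni_adj n' i (j : 'I_n'.+1) : nat_of_ord j = i.-1 -> (1 <= i)%N ->
  Dni n'.+1 i = \adj (Tmat n'.+1) ord0 j.
Proof.
move=> ej i1; rewrite /Dni (expand_det_col _ j) big_ord_recl.
rewrite big1 ?addr0; last first.
  by move=> p _; rewrite mxE /= ej prednK // eqxx mul0r.
rewrite mxE /= ej prednK // eqxx mul1r [RHS]mxE -cofactor_tr.
rewrite /cofactor; congr (_ * \det _).
apply/matrixP => p q; rewrite !mxE.
have : lift j q != j :> nat by rewrite (inj_eq val_inj) eq_sym neq_lift.
have : lift j p != j :> nat by rewrite (inj_eq val_inj) eq_sym neq_lift.
rewrite ej => h _.
have -> // : ((lift j p).+1 == i) = false.
by apply/negbTE; move: h; apply: contra => /eqP <-.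
Qed.

Lemma core n' (Y : nat -> fps rat) (j : 'I_n'.+1) W :
  Y 0 - fz ^+ 2 * Y 1 = 1 ->
  Y 1 - 2%:R * fz * Y 0 - fz ^+ 2 * Y 2 = 0 ->
  (forall m, Y m.+2 - 2%:R * fz * Y m.+1 + fz ^+ 2 * Y m - fz ^+ 2 * Y m.+3 = 0) ->
  Y n'.+1 = fz ^+ n'.+1 * W ->
  \adj (Tmat n'.+1) ord0 j * inv1 (Dn n'.+1) =
  Y j - fz ^+ n'.+3 * (W * \adj (Tmat n'.+1) ord_max j * inv1 (Dn n'.+1)).
Proof.
move=> E0 E1 Em HW.
set n := n'.+1.
set T := Tmat n; set A := \adj T; set D := Dn n.
have DI : D * inv1 D = 1 by apply: inv1P; apply: det0.
have F1 (q : 'I_n) : \sum_p A ord0 p * T p q = D * (q == ord0)%:R.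
  have := congr1 (fun M : 'M[fps rat]_n => M ord0 q) (mul_adj_mx T).
  by rewrite !mxE => ->; rewrite mulr_natr eq_sym.
have F2 (q : 'I_n) : \sum_(p < n) Y p * T p q =
    (q == 0 :> nat)%N%:R + (q.+1 == n)%N%:R * (fz ^+ 2 * Y n).
  under eq_bigr => p _ do rewrite /T TmatE.
  by apply: sumT_final.
pose ev := \row_p (D * Y p - A ord0 p).
have H1 : ev *m T = \row_q (D * ((q.+1 == n)%N%:R * (fz ^+ 2 * Y n))).
  apply/rowP => q; rewrite !mxE.
  under eq_bigr => p _ do rewrite mxE mulrBl -mulrA.
  rewrite sumrB -mulr_sumr F1 F2.
  have -> : (q == ord0) = (q == 0%N :> nat) by [].
  ring.
have H2 : ev *m T *m A = D *: ev by rewrite -mulmxA mul_mx_adj mul_mx_scalar.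
have H3 := congr1 (fun M : 'M[fps rat]_(1, n) => M ord0 j) H2.
move: H3; rewrite /= H1 !mxE big_ord_recr /= big1; last first.
  move=> q _; rewrite mxE.
  have -> : ((widen_ord (leqnSn n') q).+1 == n)%N = false.
    by rewrite /n eqSS /= ltn_eqF.
  by rewrite mul0r mulr0 mul0r.
have HA : cofactor T j ord0 = A ord0 j by rewrite /A mxE.
rewrite add0r mxE eqxx mul1r HA => H3.
have H4 : D * Y j - A ord0 j = fz ^+ 2 * Y n * A ord_max j.
  transitivity (inv1 D * (D * (D * Y j - A ord0 j))).
    by rewrite mulrA [inv1 D * D]mulrC DI mul1r.
  by rewrite -H3 mulrA mulrA [inv1 D * D]mulrC DI mul1r.
have -> : A ord0 j = D * Y j - fz ^+ 2 * Y n * A ord_max j by rewrite -H4; ring.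
rewrite HW.
transitivity (Y j * (D * inv1 D) - fz ^+ 2 * (fz ^+ n * W) * A ord_max j * inv1 D).
  ring.
have HB : cofactor T j ord_max = A ord_max j by rewrite /A mxE.
rewrite DI HB /n !exprS; ring.
Qed.


Lemma part3 t (ht : fz ^+ 3 = t * (1 - t) ^+ 2) (K : fieldType)
  (phi : {rmorphism fps rat -> K}) (mu2 mu3 : K) :
  mu2 + mu3 = phi (2%:R - t) -> mu2 * mu3 = phi ((1 - t) ^+ 2) -> mu3 != mu2 ->
  forall i, phi (aa t i) = (mu3 ^+ i - mu2 ^+ i) / (mu3 - mu2).
Proof.
move=> h1 h2 hne.
have hd : mu3 - mu2 != 0 by rewrite subr_eq0.
suff H i : phi (aa t i) = (mu3 ^+ i - mu2 ^+ i) / (mu3 - mu2) /\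
           phi (aa t i.+1) = (mu3 ^+ i.+1 - mu2 ^+ i.+1) / (mu3 - mu2).
  by move=> i; case: (H i).
elim: i => [|i [IH1 IH2]].
  by rewrite aa0 aa1 rmorph0 rmorph1 !expr0 subrr mul0r expr1 divff.
split => //.
rewrite aa_rec // rmorphB [phi (_ * aa t i.+1)]rmorphM [phi (_ * aa t i)]rmorphM -h1 -h2 IH1 IH2 !exprS.
by field.
Qed.

Theorem mainTheorem6
  (t : fps rat)
  (ht : fz ^+ 3 = t * (1 - t) ^+ 2)
  (ht6 : forall k : nat, (k < 6)%N -> coefs t k = (k == 3%N)%:R) :
  let G : fps (fps rat) := FPS (fun i => tau i - t * tau_prev i) in
  [/\
   G = fw * (1 - cz t * fw)
         * inv1 (1 - 2%:R * fw + fw ^+ 2 - cz (fz ^+ 3) * fw ^+ 3),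
   G = fw * inv1 (1 - cz (2%:R - t) * fw + cz ((1 - t) ^+ 2) * fw ^+ 2),
   (forall (i : nat) (K : fieldType) (phi : {rmorphism fps rat -> K})
           (mu2 mu3 : K),
      mu2 + mu3 = phi (2%:R - t) -> mu2 * mu3 = phi ((1 - t) ^+ 2) ->
      mu3 != mu2 ->
      phi (tau i - t * tau_prev i) = (mu3 ^+ i - mu2 ^+ i) / (mu3 - mu2))
   &
   (forall i : nat, (1 <= i)%N ->
      exists L : fps rat,
        [/\ forall k : nat, exists N : nat, forall n : nat, (N <= n)%N ->
              coefs (Dni n i * inv1 (Dn n)) k = coefs L k,
            fz ^+ (2 * i).+1 * L = t ^+ i * (tau i - t * tau_prev i)
          & forall (K : fieldType) (phi : {rmorphism fps rat -> K})
                   (mu2 mu3 : K),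
              mu2 + mu3 = phi (2%:R - t) -> mu2 * mu3 = phi ((1 - t) ^+ 2) ->
              mu3 != mu2 ->
              phi L = phi t ^+ i / phi fz ^+ (2 * i).+1
                      * ((mu3 ^+ i - mu2 ^+ i) / (mu3 - mu2))])].
Proof.
move=> G.
have hts : t = fz ^+ 3 * fdivX 3 t.
  apply: fpsP => k; rewrite coefsXnM.
  case: ltnP => hk.
    rewrite ht6; last by lia.
    by case: k hk => [|[|[|]]].
  by rewrite /= subnK.
move: (fdivX 3 t) hts => s hts.
have hs : s * (1 - t) ^+ 2 = 1.
  by apply: (@Xn_inj _ 3); rewrite mulr1 mulrA -hts.
split.
- exact: partI.
- exact: partII.
- move=> i K phi mu2 mu3 h1 h2 hne; by have := @part3 _ ht K phi mu2 mu3 h1 h2 hne i; rewrite /aa.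
move=> i i1.
pose YY := Y _ fz s (aa t).
have E0 := @YE0 _ fz s t (aa t) (aa0 t) (aa1 t) (aa_rec t ht) hts hs.
have E1 := @YE1 _ fz s t (aa t) (aa0 t) (aa1 t) (aa_rec t ht) hts hs.
have Em := @YEm _ fz s t (aa t) (aa_rec t ht) hts hs.
exists (YY i.-1); split.
- move=> k; exists (k + i)%N => n hn.
  case: n hn => [|n'] hn; first by lia.
  have ji : (i.-1 < n'.+1)%N by lia.
  pose j : 'I_n'.+1 := Ordinal ji.
  rewrite (@Dni_adj n' i j) //.
  rewrite (@core n' YY j (s ^+ n'.+2 * aa t n'.+2)) //; last first.
    by rewrite /YY /Y -mulrA.
  rewrite coefsB coefsXnM.
  have -> : (k < n'.+3)%N by lia.
  by rewrite subr0.
- case: i i1 => [|i'] //= _.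
  change (tau i'.+1 - t * tau_prev i'.+1) with (aa t i'.+1).
  rewrite /YY /Y [in t ^+ _]hts exprMn -exprM.
  have -> : (3 * i'.+1 = (2 * i'.+1).+1 + i')%N by lia.
  rewrite exprD /aa /=; ring.
- move=> K phi mu2 mu3 h1 h2 hne.
  have Ha := @part3 t ht K phi mu2 mu3 h1 h2 hne i.
  have hz : phi fz != 0.
    apply/negP => /eqP hz0.
    have pt : phi t = 0 by rewrite hts rmorphM rmorphXn hz0 expr0n mul0r.
    have hd : mu3 - mu2 != 0 by rewrite subr_eq0.
    have : (mu3 - mu2) ^+ 2 == 0.
      apply/eqP; transitivity ((mu2 + mu3) ^+ 2 - 4%:R * (mu2 * mu3)); first ring.
      rewrite h1 h2 rmorphXn !rmorphB rmorph1 rmorph_nat pt; ring.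
    by rewrite expf_eq0 /= (negbTE hd).
  case: i i1 Ha => [|i'] // _ Ha.
  rewrite -[i'.+1.-1]/i' /YY /Y !rmorphM !rmorphXn Ha [in phi t]hts rmorphM rmorphXn exprMn -exprM.
  have -> : (3 * i'.+1 = (2 * i'.+1).+1 + i')%N by lia.
  rewrite exprD.
  set a := phi fz ^+ (2 * i'.+1).+1.
  have ha : a != 0 by rewrite expf_neq0.
  set b := phi fz ^+ i'; set c := phi s ^+ i'.+1.
  congr (_ * _); by rewrite -[a * b * c]mulrA [a * _]mulrC -mulrA mulfV // mulr1.
Qed.
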